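(* Let $(X,d)$ be a $\delta$-Gromov hyperbolic space, $p\in X$, $\epsilon>0$, and $X^\epsilon=(X,d_\epsilon)$ the uniformized space. Suppose the canonical boundary map $\Phi:\partial_GX\to\partial_{d_\epsilon}X^\epsilon$ is bijective. Let $x\in\partial_{d_\epsilon}X^\epsilon$ and let $(x_n)$, $(y_n)\subseteq X$ both converge to $x$ with respect to $d_\epsilon$. Then any subsequence of $(x_n)$ that is a Gromov sequence and any subsequence of $(y_n)$ that is a Gromov sequence are equivalent Gromov sequences.
   Context: Gromov product $(x|y)_p=\frac12(d(p,x)+d(p,y)-d(x,y))$. $\delta$-Gromov hyperbolic: unbounded, proper, geodesic, and $(x|z)_p\ge\min\{(x|y)_p,(y|z)_p\}-\delta$ for all $x,y,z,p$. Uniformized metric: $d_\epsilon(x,y)=\inf_\gamma\int_\gamma e^{-\epsilon d(p,z)}ds(z)$ over $d$-rectifiable curves; $\partial_{d_\epsilon}X^\epsilon=\overline{X^\epsilon}\setminus X^\epsilon$ (closure in the completion). $\partial_GX$: geodesic rays from $p$ modulo $\gamma\sim\tilde\gamma$ iff $\sup_t d(\gamma(t),\tilde\gamma(t))<\infty$; $\Phi([\gamma])=\lim_{k\to\infty}\gamma(k)$ in $d_\epsilon$ (well defined). A Gromov sequence is $(x_n)$ with $(x_n|x_m)_p\to\infty$; Gromov sequences $(a_k),(b_k)$ are equivalent if $(a_k|b_k)_p\to\infty$. *)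

(* Defs.v *)
From Stdlib Require Import Reals Lra.
From Coquelicot Require Import Coquelicot.
Open Scope R_scope.

Section Hyp.
Variable X : Type.
Variable d : X -> X -> R.

Definition is_metric : Prop :=
  (forall x y, 0 <= d x y) /\ (forall x y, d x y = 0 <-> x = y) /\
  (forall x y, d x y = d y x) /\ (forall x y z, d x z <= d x y + d y z).

Definition open_set (U : X -> Prop) : Prop :=
  forall x, U x -> exists r, 0 < r /\ forall y, d x y < r -> U y.

Definition compact_set (K : X -> Prop) : Prop :=
  forall (I : Type) (U : I -> X -> Prop),
    (forall i, open_set (U i)) ->
    (forall x, K x -> exists i, U i x) ->
    exists l : list I, forall x, K x -> exists i, List.In i l /\ U i x.

Definition proper_space : Prop :=
  forall x r, compact_set (fun y => d x y <= r).

Definition unbounded_space : Prop :=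
  forall x M, exists y, M < d x y.

Definition geodesic_space : Prop :=
  forall x y, exists g : R -> X, g 0 = x /\ g (d x y) = y /\
    forall s t, 0 <= s <= d x y -> 0 <= t <= d x y -> d (g s) (g t) = Rabs (s - t).

Definition gprod (p x y : X) : R := (d p x + d p y - d x y) / 2.

Definition gromov_hyperbolic (delta : R) : Prop :=
  is_metric /\ unbounded_space /\ proper_space /\ geodesic_space /\
  forall x y z p, gprod p x z >= Rmin (gprod p x y) (gprod p y z) - delta.

Fixpoint poly_sum (g : R -> X) (t : nat -> R) (n : nat) : R :=
  match n with
  | O => 0
  | S k => poly_sum g t k + d (g (t k)) (g (t (S k)))
  end.

Definition curve_length (g : R -> X) (a b : R) : Rbar :=
  Lub_Rbar (fun v => exists (n : nat) (t : nat -> R),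
     t O = a /\ t n = b /\ (forall i, (i < n)%nat -> t i <= t (S i)) /\
     v = poly_sum g t n).

Definition arclength_param (g : R -> X) (L : R) : Prop :=
  0 <= L /\ forall s t, 0 <= s -> s <= t -> t <= L -> curve_length g s t = Finite (t - s).

(** Uniformized metric d_eps (base point p): infimum over rectifiable curves
    from x to y of the line integral of exp(-eps d(p,.)), the line integral
    being computed through the arc-length parametrization. *)
Definition d_eps (p : X) (eps : R) (x y : X) : R :=
  real (Glb_Rbar (fun v => exists (g : R -> X) (L : R),
     arclength_param g L /\ g 0 = x /\ g L = y /\
     v = RInt (fun t => exp (- eps * d p (g t))) 0 L)).

(** Completion of (X, d_eps): points of the completion are classes of
    d_eps-Cauchy sequences.  A boundary point (completion minus X) is
    represented by a d_eps-Cauchy sequence not converging in X. *)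
Definition eps_cauchy (p : X) (eps : R) (c : nat -> X) : Prop :=
  forall eta, 0 < eta -> exists N, forall n m, (N <= n)%nat -> (N <= m)%nat ->
     d_eps p eps (c n) (c m) < eta.

Definition eps_bdry_point (p : X) (eps : R) (c : nat -> X) : Prop :=
  eps_cauchy p eps c /\
  forall z : X, ~ is_lim_seq (fun n => d_eps p eps (c n) z) 0.

Definition compl_dist (p : X) (eps : R) (z : X) (c : nat -> X) : R :=
  real (Lim_seq (fun k => d_eps p eps z (c k))).

Definition conv_to (p : X) (eps : R) (xs : nat -> X) (c : nat -> X) : Prop :=
  is_lim_seq (fun n => compl_dist p eps (xs n) c) 0.

Definition geod_ray (p : X) (g : R -> X) : Prop :=
  g 0 = p /\ forall s t, 0 <= s -> 0 <= t -> d (g s) (g t) = Rabs (s - t).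

Definition ray_equiv (g g' : R -> X) : Prop :=
  exists M, forall t, 0 <= t -> d (g t) (g' t) <= M.

(** Phi([g]) = lim_k g(k) in d_eps. Phi : d_G X -> d_{d_eps} X^eps is bijective:
    injective on equivalence classes and surjective onto boundary points. *)
Definition Phi_bijective (p : X) (eps : R) : Prop :=
  (forall g g' c, geod_ray p g -> geod_ray p g' -> eps_bdry_point p eps c ->
     conv_to p eps (fun k => g (INR k)) c ->
     conv_to p eps (fun k => g' (INR k)) c -> ray_equiv g g') /\
  (forall c, eps_bdry_point p eps c ->
     exists g, geod_ray p g /\ conv_to p eps (fun k => g (INR k)) c).

Definition gromov_seq (p : X) (a : nat -> X) : Prop :=
  forall M, exists N, forall n m, (N <= n)%nat -> (N <= m)%nat -> M < gprod p (a n) (a m).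

Definition gromov_equiv (p : X) (a b : nat -> X) : Prop :=
  forall M, exists N, forall k, (N <= k)%nat -> M < gprod p (a k) (b k).

End Hyp.
Arguments gromov_hyperbolic {X}. Arguments Phi_bijective {X}. Arguments eps_bdry_point {X}. Arguments conv_to {X}. Arguments gromov_seq {X}. Arguments gromov_equiv {X}. Arguments d_eps {X}. Arguments gprod {X}. Arguments geod_ray {X}. Arguments ray_equiv {X}.

Definition strictly_incr (f : nat -> nat) : Prop := forall n, (f n < f (S n))%nat.

(* Main.v *)
Require Import Defs.
From Stdlib Require Import Reals Lra Lia.
From Coquelicot Require Import Coquelicot.
Open Scope R_scope.

Section Basics.
Variable X : Type.
Variable d : X -> X -> R.
Hypothesis Hm : is_metric X d.

Lemma d_nonneg x y : 0 <= d x y. Proof. apply Hm. Qed.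
Lemma d_refl x : d x x = 0. Proof. apply (proj1 (proj2 Hm)). reflexivity. Qed.
Lemma d_eq x y : d x y = 0 -> x = y. Proof. apply (proj1 (proj2 Hm)). Qed.
Lemma d_sym x y : d x y = d y x. Proof. apply Hm. Qed.
Lemma d_tri x y z : d x z <= d x y + d y z. Proof. apply Hm. Qed.

Definition part (t : nat -> R) n a b :=
  t O = a /\ t n = b /\ (forall i, (i < n)%nat -> t i <= t (S i)).

Lemma part_lo t n a b : part t n a b -> forall i, (i <= n)%nat -> a <= t i.
Proof.
  intros [H0 [Hn Hmo]] i. induction i; intros Hi.
  - lra.
  - specialize (Hmo i ltac:(lia)). specialize (IHi ltac:(lia)). lra.
Qed.

Lemma part_hi t n a b : part t n a b -> forall i, (i <= n)%nat -> t i <= b.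
Proof.
  intros [H0 [Hn Hmo]].
  assert (forall k, (k <= n)%nat -> t (n - k)%nat <= b).
  { induction k; intros Hk.
    - rewrite Nat.sub_0_r. lra.
    - specialize (IHk ltac:(lia)). specialize (Hmo (n - S k)%nat ltac:(lia)).
      replace (S (n - S k)) with (n - k)%nat in Hmo by lia. lra. }
  intros i Hi. replace i with (n - (n - i))%nat by lia. apply H. lia.
Qed.

Lemma poly_sum_ext g g' t t' n :
  (forall i, (i <= n)%nat -> g (t i) = g' (t' i)) ->
  poly_sum X d g t n = poly_sum X d g' t' n.
Proof.
  induction n; intros H; simpl; auto.
  rewrite IHn by (intros; apply H; lia). rewrite (H n), (H (S n)) by lia. auto.
Qed.

Lemma poly_sum_lip g t n a b :
  part t n a b ->
  (forall u v, a <= u -> u <= v -> v <= b -> d (g u) (g v) <= v - u) ->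
  poly_sum X d g t n <= b - a.
Proof.
  intros Hp Hl.
  assert (forall k, (k <= n)%nat -> poly_sum X d g t k <= t k - a).
  { induction k; intros Hk; simpl.
    - destruct Hp as [H0 _]. lra.
    - specialize (IHk ltac:(lia)).
      pose proof (part_lo _ _ _ _ Hp k ltac:(lia)).
      pose proof (part_hi _ _ _ _ Hp (S k) ltac:(lia)).
      destruct Hp as [_ [_ Hmo]]. specialize (Hmo k ltac:(lia)).
      pose proof (Hl (t k) (t (S k)) ltac:(lra) ltac:(lra) ltac:(lra)). lra. }
  destruct Hp as [_ [Hn _]]. specialize (H n (le_n _)). lra.
Qed.

Lemma poly_sum_S g t n : poly_sum X d g t (S n) = poly_sum X d g t n + d (g (t n)) (g (t (S n))).
Proof. reflexivity. Qed.

Definition LenEq g a b v :=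
  (forall n t, part t n a b -> poly_sum X d g t n <= v) /\
  (forall e, 0 < e -> exists n t, part t n a b /\ v - e < poly_sum X d g t n).

Lemma LenEq_curve g a b v : LenEq g a b v -> curve_length X d g a b = Finite v.
Proof.
  intros [Hu Ha]. apply is_lub_Rbar_unique. split.
  - intros x [n [t [H0 [H1 [H2 ->]]]]]. simpl. apply Hu. split; auto.
  - intros b0 Hb. destruct b0 as [r| |]; simpl; auto.
    + destruct (Rle_dec v r) as [|Hn]; auto. exfalso.
      destruct (Ha (v - r) ltac:(lra)) as [n [t [Hp Hlt]]].
      specialize (Hb (poly_sum X d g t n)). simpl in Hb.
      destruct Hp as [A [B C]].
      assert (poly_sum X d g t n <= r) by (apply Hb; exists n, t; auto). lra.
    + destruct (Ha 1 ltac:(lra)) as [n [t [Hp Hlt]]].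
      destruct Hp as [A [B C]].
      apply (Hb (poly_sum X d g t n)). exists n, t; auto.
Qed.

Lemma curve_LenEq g a b v : curve_length X d g a b = Finite v -> LenEq g a b v.
Proof.
  intros H. pose proof (Lub_Rbar_correct (fun v => exists (n : nat) (t : nat -> R),
     t O = a /\ t n = b /\ (forall i, (i < n)%nat -> t i <= t (S i)) /\
     v = poly_sum X d g t n)) as [Hub Hl].
  unfold curve_length in H. rewrite H in Hub, Hl. split.
  - intros n t [A [B C]]. specialize (Hub (poly_sum X d g t n)). simpl in Hub.
    apply Hub. exists n, t; auto.
  - intros e He. apply Classical_Prop.NNPP. intros Hn.
    specialize (Hl (Finite (v - e))). simpl in Hl.
    assert (v <= v - e); [|lra]. apply Hl.
    intros x [n [t [A [B [C ->]]]]]. simpl.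
    apply Rnot_lt_le. intros Hlt. apply Hn. exists n, t. split; [split; auto|]. auto.
Qed.

Lemma LenEq_transport g g2 c a b v :
  (forall u, a <= u <= b -> g u = g2 (u - c)) ->
  LenEq g2 (a - c) (b - c) v -> LenEq g a b v.
Proof.
  intros He [Hu Ha]. split.
  - intros n t Hp.
    rewrite (poly_sum_ext g g2 t (fun i => t i - c)).
    + apply Hu. destruct Hp as [A [B C]]. split; [lra|split;[lra|]].
      intros i Hi. specialize (C i Hi). lra.
    + intros i Hi. apply He. split; [apply (part_lo _ _ _ _ Hp i Hi)|apply (part_hi _ _ _ _ Hp i Hi)].
  - intros e He'. destruct (Ha e He') as [n [t [Hp Hlt]]].
    exists n, (fun i => t i + c). assert (Hp' : part (fun i => t i + c) n a b).
    { destruct Hp as [A [B C]]. split; [lra|split;[lra|]].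
      intros i Hi. specialize (C i Hi). lra. }
    split; auto.
    rewrite (poly_sum_ext g g2 (fun i => t i + c) t); auto.
    intros i Hi. rewrite He. f_equal. lra.
    split; [apply (part_lo _ _ _ _ Hp' i Hi)|apply (part_hi _ _ _ _ Hp' i Hi)].
Qed.

Lemma split_part g : forall n t s, part t n s (t n) -> forall m, s <= m <= t n ->
  exists n1 t1 n2 t2, part t1 n1 s m /\ part t2 n2 m (t n) /\
   poly_sum X d g t n <= poly_sum X d g t1 n1 + poly_sum X d g t2 n2.
Proof.
  induction n; intros t s Hp m Hmm.
  - destruct Hp as [A _]. exists O, (fun _ => s), O, (fun _ => m).
    refine (conj _ (conj _ _)).
    + refine (conj eq_refl (conj _ _)); [lra|intros; lia].
    + refine (conj eq_refl (conj _ _)); [lra|intros; lia].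
    + simpl. lra.
  - assert (Hp' : part t n s (t n)).
    { destruct Hp as [A [B C]]. refine (conj A (conj eq_refl _)). intros; apply C; lia. }
    pose proof (part_lo _ _ _ _ Hp n ltac:(lia)) as Hsn.
    destruct Hp as [A [B C]]. pose proof (C n ltac:(lia)) as Cn.
    destruct (Rle_dec m (t n)).
    + destruct (IHn t s Hp' m ltac:(lra)) as [n1 [t1 [n2 [t2 [H1 [H2 H3]]]]]].
      exists n1, t1, (S n2), (fun i => if Nat.leb i n2 then t2 i else t (S n)).
      split; auto. destruct H2 as [D [E F]]. split.
      * split; [simpl; auto|]. split.
        { cbv beta. rewrite (proj2 (Nat.leb_gt (S n2) n2) ltac:(lia)). auto. }
        intros i Hi. destruct (Nat.leb_spec i n2); destruct (Nat.leb_spec (S i) n2); try lia.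
        apply F; lia. replace i with n2 by lia. lra.
      * rewrite !poly_sum_S. cbv beta. rewrite (proj2 (Nat.leb_gt (S n2) n2) ltac:(lia)).
        rewrite (proj2 (Nat.leb_le n2 n2) ltac:(lia)).
        rewrite (poly_sum_ext g g (fun i => if Nat.leb i n2 then t2 i else t (S n)) t2).
        rewrite E. lra.
        intros i Hi. rewrite (proj2 (Nat.leb_le i n2) Hi). auto.
    + exists (S n), (fun i => if Nat.leb i n then t i else m), 1%nat,
        (fun i => if Nat.leb i 0 then m else t (S n)).
      split; [|split].
      * split; [simpl; auto|]. split.
        { cbv beta. rewrite (proj2 (Nat.leb_gt (S n) n) ltac:(lia)). auto. }
        intros i Hi. destruct (Nat.leb_spec i n); destruct (Nat.leb_spec (S i) n); try lia.
        apply C; lia. replace i with n by lia. lra.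
      * split; [simpl; auto|]. split; [simpl; auto|]. intros i Hi.
        replace i with O by lia. simpl. lra.
      * rewrite !poly_sum_S. cbv beta. rewrite (proj2 (Nat.leb_gt (S n) n) ltac:(lia)).
        rewrite (proj2 (Nat.leb_le n n) ltac:(lia)).
        rewrite (poly_sum_ext g g (fun i => if Nat.leb i n then t i else m) t n).
        simpl. pose proof (d_tri (g (t n)) (g m) (g (t (S n)))). lra.
        intros i Hi. rewrite (proj2 (Nat.leb_le i n) Hi). auto.
Qed.

Lemma concat_part g t1 n1 s m t2 n2 t :
  part t1 n1 s m -> part t2 n2 m t ->
  exists tt, part tt (n1 + n2) s t /\
   poly_sum X d g tt (n1 + n2) = poly_sum X d g t1 n1 + poly_sum X d g t2 n2.
Proof.
  intros [A1 [B1 C1]] [A2 [B2 C2]].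
  set (tt := fun i => if Nat.leb i n1 then t1 i else t2 (i - n1)%nat).
  assert (Htt : forall k, tt (n1 + k)%nat = t2 k).
  { intros k. unfold tt. destruct (Nat.leb_spec (n1 + k) n1).
    - replace k with O by lia. rewrite Nat.add_0_r. congruence.
    - f_equal. lia. }
  exists tt. split.
  - split; [unfold tt; simpl; auto|]. split; [rewrite Htt; auto|].
    intros i Hi. destruct (Nat.le_gt_cases n1 i).
    + replace i with (n1 + (i - n1))%nat by lia.
      replace (S (n1 + (i - n1))) with (n1 + S (i - n1))%nat by lia.
      rewrite !Htt. apply C2. lia.
    + unfold tt. rewrite (proj2 (Nat.leb_le i n1)) by lia.
      rewrite (proj2 (Nat.leb_le (S i) n1)) by lia. apply C1; lia.
  - assert (forall k, poly_sum X d g tt (n1 + k) = poly_sum X d g t1 n1 + poly_sum X d g t2 k).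
    { induction k.
      - simpl. rewrite Nat.add_0_r. rewrite Rplus_0_r. apply poly_sum_ext.
        intros i Hi. unfold tt. rewrite (proj2 (Nat.leb_le i n1) Hi). auto.
      - replace (n1 + S k)%nat with (S (n1 + k)) by lia. simpl.
        rewrite IHk. replace (S (n1 + k)) with (n1 + S k)%nat by lia. rewrite !Htt. lra. }
    apply H.
Qed.

Lemma LenEq_add g s m t v1 v2 : s <= m -> m <= t ->
  LenEq g s m v1 -> LenEq g m t v2 -> LenEq g s t (v1 + v2).
Proof.
  intros Hsm Hmt [U1 A1] [U2 A2]. split.
  - intros n tt Hp. assert (Hp' : part tt n s (tt n)) by (destruct Hp as [A [B C]]; split; auto; split; auto).
    destruct Hp as [A [B C]].
    destruct (split_part g n tt s Hp' m) as [n1 [t1 [n2 [t2 [H1 [H2 H3]]]]]].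
    rewrite B; lra. rewrite B in H2.
    specialize (U1 _ _ H1). specialize (U2 _ _ H2). lra.
  - intros e He. destruct (A1 (e/2) ltac:(lra)) as [n1 [t1 [H1 L1]]].
    destruct (A2 (e/2) ltac:(lra)) as [n2 [t2 [H2 L2]]].
    destruct (concat_part g t1 n1 s m t2 n2 t H1 H2) as [tt [Hp Hs]].
    exists (n1 + n2)%nat, tt. split; auto. rewrite Hs. lra.
Qed.

End Basics.
Section Uni.
Variable X : Type.
Variable d : X -> X -> R.
Hypothesis Hm : is_metric X d.
Variable p : X.
Variable eps : R.
Hypothesis Heps : 0 < eps.

Lemma exp_le x y : x <= y -> exp x <= exp y.
Proof. intros H. destruct (Rle_lt_or_eq_dec _ _ H) as [H'|H']. left; apply exp_increasing; auto. rewrite H'; lra. Qed.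

Lemma rev_tri a b c : Rabs (d a b - d a c) <= d b c.
Proof.
  pose proof (d_tri X d Hm a b c). pose proof (d_tri X d Hm a c b).
  rewrite (d_sym X d Hm c b) in H0. apply Rabs_le. lra.
Qed.

Lemma arc_lip g L : arclength_param X d g L -> forall u v, 0 <= u -> u <= v -> v <= L ->
  d (g u) (g v) <= v - u.
Proof.
  intros [HL Ha] u v Hu Huv Hv. specialize (Ha u v Hu Huv Hv).
  destruct (curve_LenEq X d g u v (v - u) Ha) as [Up _].
  specialize (Up 1%nat (fun i => if Nat.eqb i 0 then u else v)).
  simpl in Up. rewrite Rplus_0_l in Up. apply Up. split; [reflexivity|split;[reflexivity|]].
  intros i Hi. replace i with O by lia. simpl. auto.
Qed.

Lemma arc_lip' g L : arclength_param X d g L -> forall u v, 0 <= u <= L -> 0 <= v <= L ->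
  d (g u) (g v) <= Rabs (u - v).
Proof.
  intros Ha u v Hu Hv. destruct (Rle_dec u v).
  - rewrite Rabs_left1 by lra. pose proof (arc_lip g L Ha u v ltac:(lra) r ltac:(lra)). lra.
  - rewrite Rabs_right by lra. rewrite (d_sym X d Hm).
    pose proof (arc_lip g L Ha v u ltac:(lra) ltac:(lra) ltac:(lra)). lra.
Qed.

Definition Gc (g1 g2 : R -> X) L1 := fun u => if Rle_dec u L1 then g1 u else g2 (u - L1).

Lemma arc_concat g1 L1 g2 L2 : arclength_param X d g1 L1 -> arclength_param X d g2 L2 ->
  g1 L1 = g2 0 -> arclength_param X d (Gc g1 g2 L1) (L1 + L2).
Proof.
  intros [H1 A1] [H2 A2] E. split; [lra|]. intros s t Hs Hst Ht.
  apply LenEq_curve.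
  assert (G2 : forall u, L1 <= u -> Gc g1 g2 L1 u = g2 (u - L1)).
  { intros u Hu. unfold Gc. destruct (Rle_dec u L1). replace u with L1 by lra.
    rewrite E. f_equal. ring. auto. }
  assert (G1 : forall u, u <= L1 -> Gc g1 g2 L1 u = g1 (u - 0)).
  { intros u Hu. unfold Gc. destruct (Rle_dec u L1); [|lra]. f_equal; ring. }
  assert (LA : forall a b, 0 <= a -> a <= b -> b <= L1 -> LenEq X d (Gc g1 g2 L1) a b (b - a)).
  { intros a b Ha Hab Hb. apply LenEq_transport with (g2 := g1) (c := 0).
    intros; apply G1; lra. apply curve_LenEq. rewrite !Rminus_0_r. apply A1; lra. }
  assert (LB : forall a b, L1 <= a -> a <= b -> b <= L1 + L2 -> LenEq X d (Gc g1 g2 L1) a b (b - a)).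
  { intros a b Ha Hab Hb. apply LenEq_transport with (g2 := g2) (c := L1).
    intros; apply G2; lra. apply curve_LenEq. replace (b - a) with ((b - L1) - (a - L1)) by ring.
    apply A2; lra. }
  destruct (Rle_dec t L1). apply LA; lra.
  destruct (Rle_dec L1 s). apply LB; lra.
  replace (t - s) with ((L1 - s) + (t - L1)) by ring.
  apply LenEq_add with (m := L1); auto; try lra. apply LA; lra. apply LB; lra.
Qed.

Lemma geod_arc g L : 0 <= L -> (forall s t, 0 <= s <= L -> 0 <= t <= L -> d (g s) (g t) = Rabs (s - t)) ->
  arclength_param X d g L.
Proof.
  intros HL Hg. split; auto. intros s t Hs Hst Ht. apply LenEq_curve. split.
  - intros n tt Hp. apply (poly_sum_lip X d g tt n s t Hp).
    intros u v Hu Huv Hv. rewrite Hg by lra. rewrite Rabs_left1 by lra. lra.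
  - intros e He. exists 1%nat, (fun i => if Nat.eqb i 0 then s else t). split.
    + split; [reflexivity|split;[reflexivity|]]. intros i Hi. replace i with O by lia. simpl. auto.
    + simpl. rewrite Hg by lra. rewrite Rabs_left1 by lra. lra.
Qed.

Definition Fi (g : R -> X) := fun t => exp (- eps * d p (g t)).

Lemma lip_cont (f : R -> R) z : (forall u v, Rabs (f u - f v) <= Rabs (u - v)) -> continuous f z.
Proof.
  intros H. apply continuity_pt_filterlim. intros e He. exists e. split; auto.
  intros x [_ Hx]. simpl in *. unfold R_dist in *. eapply Rle_lt_trans; [apply H|]. auto.
Qed.

Lemma arc_int g L : arclength_param X d g L -> ex_RInt (Fi g) 0 L /\ 0 <= RInt (Fi g) 0 L.
Proof.
  intros Ha. assert (HL : 0 <= L) by apply Ha.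
  set (cl := fun t => Rmax 0 (Rmin t L)).
  assert (Hcl : forall t, 0 <= cl t <= L).
  { intros t. unfold cl, Rmax, Rmin. repeat destruct Rle_dec; lra. }
  assert (Hcll : forall u v, Rabs (cl u - cl v) <= Rabs (u - v)).
  { intros u v. unfold cl, Rmax, Rmin. repeat destruct Rle_dec; unfold Rabs; repeat destruct Rcase_abs; lra. }
  assert (Hex : ex_RInt (Fi g) 0 L).
  { apply ex_RInt_ext with (f := fun t => Fi g (cl t)).
    - intros x Hx. rewrite Rmin_left, Rmax_right in Hx by lra. unfold cl.
      rewrite Rmin_left by lra. rewrite Rmax_right by lra. auto.
    - apply (ex_RInt_continuous (V := R_CompleteNormedModule)). intros z _. unfold Fi.
      apply continuous_comp with (f := fun t => d p (g (cl t))) (g := fun y => exp (- eps * y)).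
      + apply lip_cont. intros u v. eapply Rle_trans; [apply rev_tri|].
        eapply Rle_trans; [apply (arc_lip' g L Ha); apply Hcl|]. apply Hcll.
      + apply (ex_derive_continuous (K := R_AbsRing) (V := R_NormedModule) (fun y => exp (- eps * y))). auto_derive. auto. }
  split; auto. apply RInt_ge_0; auto. intros x _. unfold Fi. left; apply exp_pos.
Qed.

Lemma RInt_concat g1 L1 g2 L2 : arclength_param X d g1 L1 -> arclength_param X d g2 L2 ->
  g1 L1 = g2 0 ->
  RInt (Fi (Gc g1 g2 L1)) 0 (L1 + L2) = RInt (Fi g1) 0 L1 + RInt (Fi g2) 0 L2.
Proof.
  intros A1 A2 E. pose proof (arc_concat _ _ _ _ A1 A2 E) as A.
  assert (H1 : 0 <= L1) by apply A1. assert (H2 : 0 <= L2) by apply A2.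
  destruct (arc_int _ _ A) as [Ex _]. destruct (arc_int _ _ A2) as [Ex2 _].
  rewrite <- (RInt_Chasles _ 0 L1 (L1 + L2)).
  2: apply ex_RInt_Chasles_1 with (L1 + L2); auto; lra.
  2: apply ex_RInt_Chasles_2 with 0; auto; lra.
  change (plus ?a ?b) with (a + b). f_equal.
  - apply RInt_ext. intros x Hx. rewrite Rmin_left, Rmax_right in Hx by lra.
    unfold Fi, Gc. destruct (Rle_dec x L1); auto; lra.
  - assert (Ex2' : ex_RInt (Fi g2) (1 * L1 + - L1) (1 * (L1 + L2) + - L1)).
    { replace (1 * L1 + - L1) with 0 by ring. replace (1 * (L1 + L2) + - L1) with L2 by ring. auto. }
    pose proof (RInt_comp_lin (Fi g2) 1 (- L1) L1 (L1 + L2) Ex2') as C.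
    replace (1 * L1 + - L1) with 0 in C by ring. replace (1 * (L1 + L2) + - L1) with L2 in C by ring.
    rewrite <- C. apply RInt_ext. intros x Hx. rewrite Rmin_left, Rmax_right in Hx by lra.
    change (scal 1 ?z) with (1 * z). unfold Fi, Gc. destruct (Rle_dec x L1); [lra|].
    rewrite Rmult_1_l. replace (1 * x + - L1) with (x - L1) by ring. reflexivity.
Qed.

Lemma glb_facts (E : R -> Prop) : (exists v, E v) -> (forall v, E v -> 0 <= v) ->
  0 <= real (Glb_Rbar E) /\ (forall v, E v -> real (Glb_Rbar E) <= v) /\
  (forall e, 0 < e -> exists v, E v /\ v < real (Glb_Rbar E) + e).
Proof.
  intros [v0 Hv0] Hpos. pose proof (Glb_Rbar_correct E) as [Hlb Hgl].
  assert (Hz : Rbar_le 0 (Glb_Rbar E)) by (apply Hgl; intros x Hx; simpl; auto).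
  pose proof (Hlb v0 Hv0) as Hv.
  destruct (Glb_Rbar E) as [r| |] eqn:Eq; simpl in *; try contradiction.
  split; auto. split. intros v Hv'. apply (Hlb v Hv'). 
  intros e He. apply Classical_Prop.NNPP. intros Hn.
  assert (Rbar_le (r + e) r). { apply Hgl. intros x Hx. simpl. apply Rnot_lt_le. intros Hl. apply Hn. exists x; auto. }
  simpl in H. lra.
Qed.

Hypothesis Hgeo : geodesic_space X d.

Definition Sset x y := fun v => exists (g : R -> X) (L : R),
     arclength_param X d g L /\ g 0 = x /\ g L = y /\
     v = RInt (fun t => exp (- eps * d p (g t))) 0 L.

Lemma geo_arc x y : exists g, g 0 = x /\ g (d x y) = y /\ arclength_param X d g (d x y) /\
  (forall s t, 0 <= s <= d x y -> 0 <= t <= d x y -> d (g s) (g t) = Rabs (s - t)).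
Proof.
  destruct (Hgeo x y) as [g [A [B C]]]. exists g. split; auto. split; auto. split; auto.
  apply geod_arc; auto. apply (d_nonneg X d Hm).
Qed.

Lemma Sset_facts x y : (exists v, Sset x y v) /\ (forall v, Sset x y v -> 0 <= v).
Proof.
  split.
  - destruct (geo_arc x y) as [g [A [B [C _]]]]. eexists. exists g, (d x y). eauto.
  - intros v [g [L [A [_ [_ ->]]]]]. apply (arc_int g L A).
Qed.

Lemma deps_facts x y : 0 <= d_eps d p eps x y /\ (forall v, Sset x y v -> d_eps d p eps x y <= v) /\
  (forall e, 0 < e -> exists v, Sset x y v /\ v < d_eps d p eps x y + e).
Proof. destruct (Sset_facts x y) as [A B]. apply (glb_facts _ A B). Qed.

Lemma deps_nonneg x y : 0 <= d_eps d p eps x y. Proof. apply deps_facts. Qed.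

Lemma deps_tri x y z : d_eps d p eps x z <= d_eps d p eps x y + d_eps d p eps y z.
Proof.
  apply Rnot_lt_le. intros Hlt. set (e := d_eps d p eps x z - (d_eps d p eps x y + d_eps d p eps y z)).
  destruct (proj2 (proj2 (deps_facts x y)) (e/2) ltac:(unfold e; lra)) as [v1 [[g1 [L1 [A1 [B1 [C1 D1]]]]] H1]].
  destruct (proj2 (proj2 (deps_facts y z)) (e/2) ltac:(unfold e; lra)) as [v2 [[g2 [L2 [A2 [B2 [C2 D2]]]]] H2]].
  assert (Hs : Sset x z (v1 + v2)).
  { exists (Gc g1 g2 L1), (L1 + L2). split. apply arc_concat; auto; congruence.
    split. unfold Gc. destruct (Rle_dec 0 L1); auto. destruct A1; lra.
    split. unfold Gc. destruct (Rle_dec (L1 + L2) L1).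
    assert (L2 = 0) by (destruct A2; lra). subst L2. rewrite Rplus_0_r. congruence.
    rewrite <- C2. f_equal. ring.
    rewrite D1, D2. symmetry. apply (RInt_concat g1 L1 g2 L2); auto. congruence. }
  pose proof (proj1 (proj2 (deps_facts x z)) _ Hs). unfold e in *. lra.
Qed.

Lemma exp_int k a b c : k <> 0 -> is_RInt (fun t => exp (k * t + c)) a b ((exp (k * b + c) - exp (k * a + c)) / k).
Proof.
  intros Hk.
  assert (E : (exp (k * b + c) - exp (k * a + c)) / k = minus (exp (k * b + c) / k) (exp (k * a + c) / k)).
  { change (minus ?u ?v) with (u - v). field. auto. }
  rewrite E. apply (is_RInt_derive (fun t => exp (k * t + c) / k)).
  - intros x _. auto_derive; auto. field. auto.
  - intros x _. apply (ex_derive_continuous (K := R_AbsRing) (V := R_NormedModule) (fun t => exp (k * t + c))). auto_derive. auto.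
Qed.

Lemma deps_bound x y : d_eps d p eps x y <= 2 / eps * exp (- eps * gprod d p x y).
Proof.
  destruct (geo_arc x y) as [g [A [B [C Hi]]]].
  set (L := d x y) in *. set (a := d p x). set (b := d p y).
  set (P := gprod d p x y). set (t0 := (L + a - b) / 2).
  assert (HP : P = (a + b - L) / 2) by reflexivity.
  assert (Hab : Rabs (a - b) <= L) by (apply rev_tri).
  apply Rabs_le_between in Hab.
  assert (HL : 0 <= L) by apply (d_nonneg X d Hm).
  assert (Ht0 : 0 <= t0 <= L) by (unfold t0; lra).
  assert (Hlow : forall t, 0 <= t <= L -> a - t <= d p (g t) /\ b - (L - t) <= d p (g t)).
  { intros t Ht. pose proof (d_tri X d Hm p (g t) x). pose proof (d_tri X d Hm p (g t) y).
    rewrite <- A in H at 2. rewrite <- B in H0 at 2. rewrite Hi in H, H0 by lra.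
    rewrite Rabs_right in H by lra. rewrite Rabs_left1 in H0 by lra. fold a b in H, H0. split; lra. }
  eapply Rle_trans. apply (proj1 (proj2 (deps_facts x y))).
  exists g, L. split; [exact C|split;[exact A|split;[exact B|reflexivity]]].
  change (RInt (Fi g) 0 L <= 2 / eps * exp (- eps * P)).
  destruct (arc_int g L C) as [Ex _].
  rewrite <- (RInt_Chasles _ 0 t0 L).
  2: apply ex_RInt_Chasles_1 with L; auto; lra.
  2: apply ex_RInt_Chasles_2 with 0; auto; lra.
  change (plus ?u ?v) with (u + v).
  assert (Hta : t0 + P = a) by (unfold t0; rewrite HP; field).
  assert (Htb : P - t0 = b - L) by (unfold t0; rewrite HP; field).
  pose proof (exp_int eps 0 t0 (- eps * t0 - eps * P) ltac:(lra)) as I1.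
  pose proof (exp_int (- eps) t0 L (eps * t0 - eps * P) ltac:(lra)) as I2.
  assert (R1 : RInt (Fi g) 0 t0 <=
     (exp (eps * t0 + (- eps * t0 - eps * P)) - exp (eps * 0 + (- eps * t0 - eps * P))) / eps).
  { rewrite <- (is_RInt_unique _ _ _ _ I1). apply RInt_le; try lra.
    apply (ex_RInt_Chasles_1 (V := R_CompleteNormedModule)) with L; auto; lra. eexists; eauto.
    intros t Ht. unfold Fi. apply exp_le. destruct (Hlow t ltac:(lra)). nra. }
  assert (R2 : RInt (Fi g) t0 L <=
     (exp (- eps * L + (eps * t0 - eps * P)) - exp (- eps * t0 + (eps * t0 - eps * P))) / - eps).
  { rewrite <- (is_RInt_unique _ _ _ _ I2). apply RInt_le; try lra.
    apply (ex_RInt_Chasles_2 (V := R_CompleteNormedModule)) with 0; auto; lra. eexists; eauto.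
    intros t Ht. unfold Fi. apply exp_le. destruct (Hlow t ltac:(lra)). nra. }
  replace (eps * t0 + (- eps * t0 - eps * P)) with (- eps * P) in R1 by ring.
  replace (- eps * t0 + (eps * t0 - eps * P)) with (- eps * P) in R2 by ring.
  pose proof (exp_pos (eps * 0 + (- eps * t0 - eps * P))).
  pose proof (exp_pos (- eps * L + (eps * t0 - eps * P))).
  set (E := exp (- eps * P)) in *.
  set (e1 := exp (eps * 0 + (- eps * t0 - eps * P))) in *.
  set (e2 := exp (- eps * L + (eps * t0 - eps * P))) in *.
  assert (Hi1 : 0 < / eps) by (apply Rinv_0_lt_compat; auto).
  assert (Q1 : (E - e1) / eps <= E / eps) by (unfold Rdiv; apply Rmult_le_compat_r; lra).
  assert (Q2 : (e2 - E) / - eps = (E - e2) / eps) by (field; lra).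
  assert (Q3 : (E - e2) / eps <= E / eps) by (unfold Rdiv; apply Rmult_le_compat_r; lra).
  assert (Q4 : 2 / eps * E = E / eps + E / eps) by (field; lra).
  lra.
Qed.

End Uni.
From Stdlib Require Import ZArith ClassicalEpsilon.
Open Scope R_scope.

Lemma nat_above r : exists n : nat, r < INR n.
Proof.
  destruct (archimed r) as [H1 _]. destruct (Rlt_or_le r 0).
  - exists O. simpl. lra.
  - exists (Z.to_nat (up r)). rewrite INR_IZR_INZ. rewrite Z2Nat.id. lra.
    apply le_IZR. lra.
Qed.

Lemma small_le x N : (forall i, (N <= i)%nat -> x <= 1 / (INR i + 1)) -> x <= 0.
Proof.
  intros H. apply Rnot_lt_le. intros Hx. destruct (nat_above (1 / x)) as [n Hn].
  specialize (H (N + n)%nat ltac:(lia)). rewrite plus_INR in H.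
  pose proof (pos_INR N). pose proof (pos_INR n).
  assert (1 / (INR N + INR n + 1) < x).
  { apply Rmult_lt_reg_r with (INR N + INR n + 1). lra.
    unfold Rdiv. rewrite Rmult_assoc, Rinv_l, Rmult_1_r by lra.
    apply Rmult_lt_reg_l with (/ x). apply Rinv_0_lt_compat; auto.
    rewrite <- Rmult_assoc, Rinv_l, Rmult_1_l by lra. unfold Rdiv in Hn. lra. }
  lra.
Qed.

Lemma inv_le i j : (i <= j)%nat -> 1 / (INR j + 1) <= 1 / (INR i + 1).
Proof.
  intros H. apply le_INR in H. pose proof (pos_INR i).
  unfold Rdiv. rewrite !Rmult_1_l. apply Rinv_le_contravar; lra.
Qed.

Lemma inv_pos i : 0 < 1 / (INR i + 1).
Proof. pose proof (pos_INR i). unfold Rdiv. rewrite Rmult_1_l. apply Rinv_0_lt_compat. lra. Qed.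

Lemma inv_le1 i : 1 / (INR i + 1) <= 1.
Proof. pose proof (inv_le 0 i ltac:(lia)). simpl in H. replace (1 / (0 + 1)) with 1 in H by field. auto. Qed.

Lemma si_ge f : strictly_incr f -> forall i, (i <= f i)%nat.
Proof. intros H i. induction i. lia. specialize (H i). lia. Qed.

Lemma si_comp f g : strictly_incr f -> strictly_incr g -> strictly_incr (fun i => f (g i)).
Proof.
  intros Hf Hg i. specialize (Hg i).
  assert (forall a b, (a < b)%nat -> (f a < f b)%nat).
  { intros a b Hab. induction Hab. apply Hf. specialize (Hf m). lia. }
  apply H; auto.
Qed.

Lemma subseq_of (P : nat -> nat -> Prop) : (forall N k, exists i, (N <= i)%nat /\ P k i) ->
  exists rho, strictly_incr rho /\ forall k, P k (rho k).
Proof.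
  intros H. set (f := fun N k => proj1_sig (constructive_indefinite_description _ (H N k))).
  assert (Hf : forall N k, (N <= f N k)%nat /\ P k (f N k)).
  { intros N k. unfold f. destruct (constructive_indefinite_description _ (H N k)); simpl; auto. }
  exists (fix rho k := match k with O => f O O | S k' => f (S (rho k')) (S k') end).
  split.
  - intros i. simpl. apply Hf.
  - intros k. destruct k; simpl; apply Hf.
Qed.

Section Gp.
Variable X : Type.
Variable d : X -> X -> R.
Hypothesis Hm : is_metric X d.

Lemma gprod_sym p x y : gprod d p x y = gprod d p y x.
Proof. unfold gprod. rewrite (d_sym X d Hm x y). field. Qed.
Lemma gprod_self p x : gprod d p x x = d p x.
Proof. unfold gprod. rewrite (d_refl X d Hm). field. Qed.
Lemma gprod_lip p x y y' : gprod d p x y' - d y y' <= gprod d p x y.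
Proof.
  unfold gprod. pose proof (d_tri X d Hm p y y'). pose proof (d_tri X d Hm x y' y).
  pose proof (d_sym X d Hm y y'). lra.
Qed.

Lemma cluster (K : X -> Prop) (u : nat -> X) : compact_set X d K -> (forall n, K (u n)) ->
  exists q, forall r, 0 < r -> forall N, exists i, (N <= i)%nat /\ d (u i) q < r.
Proof.
  intros Hc Hu. apply Classical_Prop.NNPP. intros Hn.
  set (I := {t : X * R * nat | 0 < snd (fst t) /\ forall i, (snd t <= i)%nat -> snd (fst t) <= d (u i) (fst (fst t))}).
  set (U := fun (t : I) x => d (fst (fst (proj1_sig t))) x < snd (fst (proj1_sig t))).
  destruct (Hc I U) as [l Hl].
  - intros [[[q r] N] [Hr HN]] x Hx. unfold U in *; simpl in *.
    exists (r - d q x). split. lra. intros y Hy. pose proof (d_tri X d Hm q x y). lra.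
  - intros x Kx. apply Classical_Prop.NNPP. intros Hn2. apply Hn. exists x.
    intros r Hr N. apply Classical_Prop.NNPP. intros Hn3. apply Hn2.
    assert (P : 0 < snd (fst (x, r, N)) /\ forall i, (snd (x, r, N) <= i)%nat -> snd (fst (x, r, N)) <= d (u i) (fst (fst (x, r, N)))).
    { simpl. split; auto. intros i Hi. apply Rnot_lt_le. intros Hlt. apply Hn3. exists i; auto. }
    exists (exist _ (x, r, N) P). unfold U; simpl. rewrite (d_refl X d Hm). auto.
  - set (Nm := List.fold_right (fun (t : I) acc => Nat.max (snd (proj1_sig t)) acc) O l).
    assert (HNm : forall t, List.In t l -> (snd (proj1_sig t) <= Nm)%nat).
    { unfold Nm. clear. induction l; simpl. tauto. intros t [->|Ht]. lia. specialize (IHl t Ht). lia. }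
    destruct (Hl (u Nm) (Hu Nm)) as [t [Hin HU]].
    specialize (HNm _ Hin). clear Hin. unfold U in HU. destruct t as [[[q r] N] PP]. simpl in HU, HNm. pose proof (proj2 PP Nm HNm) as HN. simpl in HN.
    rewrite (d_sym X d Hm) in HU. lra.
Qed.

Lemma seqcpt p r (u : nat -> X) : proper_space X d -> (forall n, d p (u n) <= r) ->
  exists qr : X * (nat -> nat), strictly_incr (snd qr) /\ forall i, d (u (snd qr i)) (fst qr) < 1 / (INR i + 1).
Proof.
  intros Hp Hu. destruct (cluster (fun y => d p y <= r) u (Hp p r) Hu) as [q Hq].
  destruct (subseq_of (fun k i => d (u i) q < 1 / (INR k + 1))) as [rho [H1 H2]].
  { intros N k. apply Hq. apply inv_pos. }
  exists (q, rho). simpl. auto.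
Qed.

End Gp.
Section Ray.
Variable X : Type.
Variable d : X -> X -> R.
Hypothesis Hm : is_metric X d.
Variable p : X.
Variable delta : R.
Hypothesis Hprop : proper_space X d.
Hypothesis Hgeo : geodesic_space X d.
Hypothesis Hhyp : forall x y z p, gprod d p x z >= Rmin (gprod d p x y) (gprod d p y z) - delta.
Variable a : nat -> X.
Hypothesis Ha : gromov_seq d p a.

Definition D m := d p (a m).
Definition sg m : R -> X := proj1_sig (constructive_indefinite_description _ (Hgeo p (a m))).
Lemma sg_spec m : sg m 0 = p /\ sg m (D m) = a m /\
  forall s t, 0 <= s <= D m -> 0 <= t <= D m -> d (sg m s) (sg m t) = Rabs (s - t).
Proof. unfold sg, D. destruct (constructive_indefinite_description _ _); simpl; auto. Qed.

Definition tau m t := sg m (Rmin t (D m)).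

Lemma D_nonneg m : 0 <= D m. Proof. apply (d_nonneg X d Hm). Qed.

Lemma tau_p m t : 0 <= t -> d p (tau m t) = Rmin t (D m).
Proof.
  intros Ht. destruct (sg_spec m) as [A [B C]]. unfold tau. rewrite <- A at 1.
  pose proof (D_nonneg m). rewrite C. rewrite Rabs_left1. ring.
  unfold Rmin; destruct Rle_dec; lra. lra. unfold Rmin; destruct Rle_dec; lra.
Qed.

Lemma tau_lip m s t : 0 <= s -> 0 <= t -> d (tau m s) (tau m t) <= Rabs (s - t).
Proof.
  intros Hs Ht. destruct (sg_spec m) as [A [B C]]. unfold tau. pose proof (D_nonneg m).
  rewrite C. unfold Rmin, Rabs; repeat destruct Rle_dec; repeat destruct Rcase_abs; lra.
  unfold Rmin; destruct Rle_dec; lra. unfold Rmin; destruct Rle_dec; lra.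
Qed.

Lemma tau_gp m t : 0 <= t -> gprod d p (a m) (tau m t) = Rmin t (D m).
Proof.
  intros Ht. unfold gprod. rewrite tau_p by auto. destruct (sg_spec m) as [A [B C]].
  pose proof (D_nonneg m). unfold tau. rewrite <- B at 2. rewrite C.
  fold (D m). unfold Rmin, Rabs; repeat destruct Rle_dec; repeat destruct Rcase_abs; lra.
  lra. unfold Rmin; destruct Rle_dec; lra.
Qed.

Lemma bigD M : exists N, forall m, (N <= m)%nat -> M < D m.
Proof.
  destruct (Ha M) as [N HN]. exists N. intros m Hm'. specialize (HN m m Hm' Hm').
  rewrite (gprod_self X d Hm) in HN. auto.
Qed.

Lemma step_ex (th : nat -> nat) (k : nat) : exists qr : X * (nat -> nat), strictly_incr (snd qr) /\
  forall i, d (tau (th (snd qr i)) (INR k)) (fst qr) < 1 / (INR i + 1).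
Proof.
  apply (seqcpt X d Hm p (INR k) (fun i => tau (th i) (INR k)) Hprop).
  intros n. rewrite tau_p by apply pos_INR. apply Rmin_l.
Qed.

Definition step th k := proj1_sig (constructive_indefinite_description _ (step_ex th k)).
Lemma step_spec th k : strictly_incr (snd (step th k)) /\
  forall i, d (tau (th (snd (step th k) i)) (INR k)) (fst (step th k)) < 1 / (INR i + 1).
Proof. unfold step. destruct (constructive_indefinite_description _ _); simpl; auto. Qed.

Fixpoint th (k : nat) : nat -> nat :=
  let pv := match k with O => (fun j => j) | S k' => th k' end in
  fun i => pv (snd (step pv k) i).

Definition pv k := match k with O => (fun j : nat => j) | S k' => th k' end.
Definition q k := fst (step (pv k) k).

Lemma th_eq k i : th k i = pv k (snd (step (pv k) k) i).
Proof. destruct k; reflexivity. Qed.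

Lemma pv_ge k : forall i, (i <= pv k i)%nat.
Proof.
  induction k; intros i. simpl. lia. simpl. change (th k i) with (th k i).
  rewrite th_eq. pose proof (si_ge _ (proj1 (step_spec (pv k) k)) i).
  pose proof (IHk (snd (step (pv k) k) i)). lia.
Qed.

Lemma th_ge k i : (i <= th k i)%nat.
Proof. pose proof (pv_ge (S k) i). auto. Qed.

Lemma th_spec k i : d (tau (th k i) (INR k)) (q k) < 1 / (INR i + 1).
Proof. rewrite th_eq. unfold q. apply step_spec. Qed.

Lemma th_spec_S k i : d (tau (th (S k) i) (INR k)) (q k) < 1 / (INR i + 1).
Proof.
  rewrite th_eq. simpl pv. set (j := snd (step (th k) (S k)) i).
  pose proof (si_ge _ (proj1 (step_spec (th k) (S k))) i). fold j in H.
  eapply Rlt_le_trans. apply th_spec. apply inv_le. auto.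
Qed.

Lemma q_dp k : d p (q k) = INR k.
Proof.
  destruct (bigD (INR k)) as [N HN].
  assert (forall i, (N <= i)%nat -> Rabs (d p (q k) - INR k) <= 1 / (INR i + 1)).
  { intros i Hi. pose proof (th_spec k i). pose proof (th_ge k i).
    assert (E : d p (tau (th k i) (INR k)) = INR k).
    { rewrite tau_p by apply pos_INR. apply Rmin_left. left; apply HN; lia. }
    pose proof (rev_tri X d Hm p (q k) (tau (th k i) (INR k))) as R. rewrite E in R.
    rewrite (d_sym X d Hm (q k) (tau (th k i) (INR k))) in R. lra. }
  pose proof (small_le _ N H). pose proof (Rabs_pos (d p (q k) - INR k)).
  assert (Rabs (d p (q k) - INR k) = 0) by lra. apply Rabs_eq_0 in H2. lra.
Qed.

Lemma q_step k : d (q k) (q (S k)) <= 1.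
Proof.
  assert (forall i, (0 <= i)%nat -> (d (q k) (q (S k)) - 1) / 2 <= 1 / (INR i + 1)).
  { intros i _. pose proof (th_spec_S k i). pose proof (th_spec (S k) i).
    pose proof (tau_lip (th (S k) i) (INR k) (INR (S k)) (pos_INR _) (pos_INR _)).
    rewrite S_INR in H1. replace (INR k - (INR k + 1)) with (-1) in H1 by ring.
    replace (Rabs (-1)) with 1 in H1 by (rewrite Rabs_left; lra). rewrite S_INR in H0.
    pose proof (d_tri X d Hm (q k) (tau (th (S k) i) (INR k)) (q (S k))).
    pose proof (d_tri X d Hm (tau (th (S k) i) (INR k)) (tau (th (S k) i) (INR k + 1)) (q (S k))).
    rewrite (d_sym X d Hm (q k) (tau (th (S k) i) (INR k))) in H2. lra. }
  pose proof (small_le _ 0 H). lra.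
Qed.

Lemma q_gromov M : exists N K, forall n k, (N <= n)%nat -> (K <= k)%nat -> M < gprod d p (a n) (q k).
Proof.
  destruct (Ha (M + delta + 1)) as [N HN]. destruct (nat_above (M + delta + 1)) as [K HK].
  exists N, K. intros n k Hn Hk.
  set (m := th k N). assert (Hmn : (N <= m)%nat) by apply th_ge.
  pose proof (th_spec k N). fold m in H. pose proof (inv_le1 N).
  pose proof (Hhyp (a n) (a m) (tau m (INR k)) p).
  rewrite tau_gp in H1 by apply pos_INR.
  assert (HD : M + delta + 1 < D m). { unfold D. rewrite <- (gprod_self X d Hm). apply HN; auto. }
  assert (Hk' : M + delta + 1 < INR k). { apply le_INR in Hk. lra. }
  pose proof (HN n m Hn Hmn).
  assert (M + delta + 1 < Rmin (gprod d p (a n) (a m)) (Rmin (INR k) (D m))).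
  { apply Rmin_glb_lt; auto. apply Rmin_glb_lt; auto. }
  pose proof (gprod_lip X d Hm p (a n) (q k) (tau m (INR k))).
  rewrite (d_sym X d Hm) in H4. lra.
Qed.

Lemma q_dist i j : d (q i) (q (i + j)) = INR j.
Proof.
  apply Rle_antisym.
  - induction j. rewrite Nat.add_0_r, (d_refl X d Hm). simpl; lra.
    replace (i + S j)%nat with (S (i + j)) by lia.
    pose proof (d_tri X d Hm (q i) (q (i + j)) (q (S (i + j)))). pose proof (q_step (i + j)).
    rewrite S_INR. lra.
  - pose proof (d_tri X d Hm p (q i) (q (i + j))). rewrite !q_dp, plus_INR in H. lra.
Qed.

Lemma q0 : q 0 = p.
Proof. apply (d_eq X d Hm). rewrite (d_sym X d Hm). rewrite q_dp. reflexivity. Qed.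

Definition seg k : R -> X := proj1_sig (constructive_indefinite_description _ (Hgeo (q k) (q (S k)))).
Lemma seg_spec k : seg k 0 = q k /\ seg k 1 = q (S k) /\
  forall s t, 0 <= s <= 1 -> 0 <= t <= 1 -> d (seg k s) (seg k t) = Rabs (s - t).
Proof.
  pose proof (q_dist k 1). replace (k + 1)%nat with (S k) in H by lia. simpl in H.
  unfold seg. destruct (constructive_indefinite_description _ _) as [g [A [B C]]]; simpl.
  rewrite H in B, C. auto.
Qed.

Definition fl t := Z.to_nat (Int_part t).
Lemma fl_spec t : 0 <= t -> INR (fl t) <= t < INR (fl t) + 1.
Proof.
  intros Ht. destruct (base_Int_part t) as [H1 H2]. unfold fl.
  assert (0 <= Int_part t)%Z.
  { assert (IZR (-1) < IZR (Int_part t)) by (simpl; lra). apply lt_IZR in H. lia. }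
  rewrite INR_IZR_INZ, Z2Nat.id by auto. lra.
Qed.

Lemma fl_unique j k : INR j < INR k + 1 -> INR k < INR j + 1 -> j = k.
Proof.
  intros H1 H2. rewrite <- S_INR in H1, H2. apply INR_lt in H1. apply INR_lt in H2. lia.
Qed.

Lemma fl_nat k : fl (INR k) = k.
Proof.
  pose proof (fl_spec (INR k) (pos_INR k)). apply fl_unique; lra.
Qed.

Definition gam t := seg (fl t) (t - INR (fl t)).

Lemma gam_nat k : gam (INR k) = q k.
Proof. unfold gam. rewrite fl_nat. replace (INR k - INR k) with 0 by ring. apply seg_spec. Qed.

Lemma gam_iso_le s t : 0 <= s -> s <= t -> d (gam s) (gam t) = t - s.
Proof.
  intros Hs Hst. unfold gam. set (i := fl s). set (j := fl t).
  pose proof (fl_spec s Hs) as Fs. pose proof (fl_spec t ltac:(lra)) as Ft. fold i in Fs. fold j in Ft.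
  assert (Hij : (i <= j)%nat). { assert (INR i < INR j + 1) by lra. rewrite <- S_INR in H. apply INR_lt in H. lia. }
  destruct (seg_spec i) as [Ai [Bi Ci]]. destruct (seg_spec j) as [Aj [Bj Cj]].
  destruct (Nat.eq_dec i j) as [E|E].
  - rewrite <- E. rewrite Ci by (rewrite <- E in Ft; lra). rewrite <- E in Ft.
    rewrite Rabs_left1 by lra. ring.
  - assert (Hij' : (S i <= j)%nat) by lia. apply le_INR in Hij'. rewrite S_INR in Hij'.
    pose proof (q_dist (S i) (j - S i)) as Q1. replace (S i + (j - S i))%nat with j in Q1 by lia.
    rewrite minus_INR in Q1 by lia. rewrite S_INR in Q1.
    pose proof (q_dist i (S j - i)) as Q2. replace (i + (S j - i))%nat with (S j) in Q2 by lia.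
    rewrite minus_INR in Q2 by lia. rewrite S_INR in Q2.
    pose proof (Ci (s - INR i) 1 ltac:(lra) ltac:(lra)) as E1. rewrite Bi in E1.
    pose proof (Ci 0 (s - INR i) ltac:(lra) ltac:(lra)) as E2. rewrite Ai in E2.
    pose proof (Cj 0 (t - INR j) ltac:(lra) ltac:(lra)) as E3. rewrite Aj in E3.
    pose proof (Cj (t - INR j) 1 ltac:(lra) ltac:(lra)) as E4. rewrite Bj in E4.
    rewrite Rabs_left1 in E1 by lra. rewrite Rabs_left1 in E2 by lra.
    rewrite Rabs_left1 in E3 by lra. rewrite Rabs_left1 in E4 by lra.
    set (x := seg i (s - INR i)) in *. set (y := seg j (t - INR j)) in *.
    pose proof (d_tri X d Hm x (q (S i)) (q j)). pose proof (d_tri X d Hm x (q j) y).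
    pose proof (d_tri X d Hm (q i) x (q (S j))). pose proof (d_tri X d Hm x y (q (S j))).
    apply Rle_antisym; lra.
Qed.

Lemma gam_ray : geod_ray d p gam.
Proof.
  split. replace 0 with (INR 0) by reflexivity. rewrite gam_nat. apply q0.
  intros s t Hs Ht. destruct (Rle_dec s t).
  - rewrite gam_iso_le by auto. rewrite Rabs_left1 by lra. ring.
  - rewrite (d_sym X d Hm). rewrite gam_iso_le by lra. rewrite Rabs_right by lra. ring.
Qed.

End Ray.
Section Fin.
Variable X : Type.
Variable d : X -> X -> R.
Hypothesis Hm : is_metric X d.
Hypothesis Hgeo : geodesic_space X d.
Variable p : X.
Variable eps : R.
Hypothesis Heps : 0 < eps.

Lemma cd_lim z c : eps_cauchy X d p eps c ->
  is_lim_seq (fun k => d_eps d p eps z (c k)) (compl_dist X d p eps z c).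
Proof.
  intros Hc. assert (Hex : ex_finite_lim_seq (fun k => d_eps d p eps z (c k))).
  { apply ex_lim_seq_cauchy_corr. intros e. destruct (Hc e (cond_pos e)) as [N HN].
    exists N. intros n m Hn Hmm. pose proof (HN n m Hn Hmm). pose proof (HN m n Hmm Hn).
    pose proof (deps_tri X d Hm p eps Hgeo z (c m) (c n)).
    pose proof (deps_tri X d Hm p eps Hgeo z (c n) (c m)).
    apply Rabs_lt_between. lra. }
  destruct Hex as [l Hl]. unfold compl_dist. rewrite (is_lim_seq_unique _ _ Hl). simpl. auto.
Qed.

Lemma cd_nonneg z c : eps_cauchy X d p eps c -> 0 <= compl_dist X d p eps z c.
Proof.
  intros Hc. pose proof (is_lim_seq_le (fun _ => 0) _ 0 _ (fun k => deps_nonneg X d Hm p eps Hgeo z (c k))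
    (is_lim_seq_const 0) (cd_lim z c Hc)). simpl in H. auto.
Qed.

Lemma cd_tri z w c : eps_cauchy X d p eps c ->
  compl_dist X d p eps z c <= d_eps d p eps z w + compl_dist X d p eps w c.
Proof.
  intros Hc. pose proof (is_lim_seq_le _ (fun k => d_eps d p eps z w + d_eps d p eps w (c k)) _ _
    (fun k => deps_tri X d Hm p eps Hgeo z w (c k)) (cd_lim z c Hc)
    (is_lim_seq_plus' _ _ _ _ (is_lim_seq_const (d_eps d p eps z w)) (cd_lim w c Hc))).
  simpl in H. auto.
Qed.

Lemma conv_ray c xs phi (g : R -> X) : eps_cauchy X d p eps c -> conv_to d p eps xs c ->
  strictly_incr phi ->
  (forall M, exists N K, forall n k, (N <= n)%nat -> (K <= k)%nat -> M < gprod d p (xs (phi n)) (g (INR k))) ->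
  conv_to d p eps (fun k => g (INR k)) c.
Proof.
  intros Hc Hx Hphi HG. unfold conv_to. apply is_lim_seq_spec. intros e.
  pose proof (cond_pos e) as He.
  set (M := - ln (e * eps / 4) / eps).
  assert (HM : exp (- eps * M) = e * eps / 4).
  { unfold M. replace (- eps * (- ln (e * eps / 4) / eps)) with (ln (e * eps / 4)) by (field; lra).
    apply exp_ln. apply Rmult_lt_0_compat; [apply Rmult_lt_0_compat|]; lra. }
  destruct (HG M) as [N [K HNK]].
  apply is_lim_seq_spec in Hx. destruct (Hx (mkposreal (e / 2) ltac:(lra))) as [N2 HN2]. simpl in HN2.
  set (n := Nat.max N N2). assert (Hn2 : (N2 <= phi n)%nat) by (pose proof (si_ge _ Hphi n); lia).
  specialize (HN2 _ Hn2). rewrite Rminus_0_r in HN2.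
  exists K. intros k Hk. rewrite Rminus_0_r.
  pose proof (HNK n k ltac:(lia) Hk) as Hg.
  pose proof (cd_tri (g (INR k)) (xs (phi n)) c Hc).
  pose proof (cd_nonneg (g (INR k)) c Hc).
  pose proof (deps_bound X d Hm p eps Heps Hgeo (g (INR k)) (xs (phi n))).
  rewrite (gprod_sym X d Hm) in H1.
  assert (exp (- eps * gprod d p (xs (phi n)) (g (INR k))) < exp (- eps * M)).
  { apply exp_increasing. nra. }
  rewrite HM in H2.
  assert (2 / eps * exp (- eps * gprod d p (xs (phi n)) (g (INR k))) < e / 2).
  { replace (e / 2) with (2 / eps * (e * eps / 4)) by (field; lra).
    apply Rmult_lt_compat_l; auto. unfold Rdiv. apply Rmult_lt_0_compat. lra. apply Rinv_0_lt_compat; auto. }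
  rewrite Rabs_right by lra. rewrite Rabs_right in HN2 by (apply Rle_ge, cd_nonneg; auto). lra.
Qed.

End Fin.

Theorem lemma3p5 (X : Type) (d : X -> X -> R) (delta : R) (p : X) (eps : R) :
  gromov_hyperbolic d delta -> 0 < eps -> Phi_bijective d p eps ->
  forall (c : nat -> X), eps_bdry_point d p eps c ->
  forall (xs ys : nat -> X), conv_to d p eps xs c -> conv_to d p eps ys c ->
  forall (phi psi : nat -> nat), strictly_incr phi -> strictly_incr psi ->
  gromov_seq d p (fun n => xs (phi n)) -> gromov_seq d p (fun n => ys (psi n)) ->
  gromov_equiv d p (fun n => xs (phi n)) (fun n => ys (psi n)).
Proof.
  intros Hh Heps [Hinj _] c Hc xs ys Hx Hy phi psi Hphi Hpsi Ga Gb.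
  destruct Hh as [Hm [_ [Hprop [Hgeo Hhyp]]]].
  assert (Hd : 0 <= delta).
  { pose proof (Hhyp p p p p). unfold gprod in H. rewrite (d_refl X d Hm) in H.
    rewrite Rmin_left in H by lra. lra. }
  set (a := fun n => xs (phi n)) in *. set (b := fun n => ys (psi n)) in *.
  set (ga := gam X d Hm p Hprop Hgeo a). set (gb := gam X d Hm p Hprop Hgeo b).
  assert (HGa : forall M, exists N K, forall n k, (N <= n)%nat -> (K <= k)%nat -> M < gprod d p (a n) (ga (INR k))).
  { intros M. destruct (q_gromov X d Hm p delta Hprop Hgeo Hhyp a Ga M) as [N [K H]].
    exists N, K. intros n k Hn Hk. unfold ga. rewrite gam_nat by auto. auto. }
  assert (HGb : forall M, exists N K, forall n k, (N <= n)%nat -> (K <= k)%nat -> M < gprod d p (b n) (gb (INR k))).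
  { intros M. destruct (q_gromov X d Hm p delta Hprop Hgeo Hhyp b Gb M) as [N [K H]].
    exists N, K. intros n k Hn Hk. unfold gb. rewrite gam_nat by auto. auto. }
  assert (Ra : geod_ray d p ga) by (apply gam_ray; auto).
  assert (Rb : geod_ray d p gb) by (apply gam_ray; auto).
  destruct (Hinj ga gb c Ra Rb Hc) as [M0 HM0].
  - apply (conv_ray X d Hm Hgeo p eps Heps c xs phi ga (proj1 Hc) Hx Hphi HGa).
  - apply (conv_ray X d Hm Hgeo p eps Heps c ys psi gb (proj1 Hc) Hy Hpsi HGb).
  - intros M. set (T := M + 2 * delta + 1).
    destruct (HGa T) as [Na [Ka HA]]. destruct (HGb T) as [Nb [Kb HB]].
    destruct (nat_above (T + M0 / 2)) as [K0 HK0].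
    set (k := Nat.max K0 (Nat.max Ka Kb)).
    exists (Nat.max Na Nb). intros n Hn.
    specialize (HA n k ltac:(lia) ltac:(lia)). specialize (HB n k ltac:(lia) ltac:(lia)).
    assert (Hk : INR K0 <= INR k) by (apply le_INR; lia).
    pose proof (HM0 (INR k) (pos_INR k)) as Hab.
    assert (Hpa : d p (ga (INR k)) = INR k).
    { destruct Ra as [R0 R1]. rewrite <- R0 at 1. rewrite R1 by (lra || apply pos_INR). rewrite Rabs_left1; pose proof (pos_INR k); lra. }
    assert (Hpb : d p (gb (INR k)) = INR k).
    { destruct Rb as [R0 R1]. rewrite <- R0 at 1. rewrite R1 by (lra || apply pos_INR). rewrite Rabs_left1; pose proof (pos_INR k); lra. }
    assert (Hgg : T < gprod d p (ga (INR k)) (gb (INR k))).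
    { unfold gprod. rewrite Hpa, Hpb. lra. }
    pose proof (Hhyp (ga (INR k)) (gb (INR k)) (b n) p) as H2.
    rewrite (gprod_sym X d Hm p (gb (INR k)) (b n)) in H2.
    assert (T - delta < gprod d p (ga (INR k)) (b n)).
    { assert (T < Rmin (gprod d p (ga (INR k)) (gb (INR k))) (gprod d p (b n) (gb (INR k)))) by (apply Rmin_glb_lt; auto). lra. }
    pose proof (Hhyp (a n) (ga (INR k)) (b n) p) as H3.
    assert (T - delta < Rmin (gprod d p (a n) (ga (INR k))) (gprod d p (ga (INR k)) (b n))) by (apply Rmin_glb_lt; lra).
    unfold T in *. lra.
Qed.
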